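(* With the notation in the context, the following identity of linear endomorphisms of $\mathbb C^{\mathcal L(\Omega)}$ holds: $(q^2-1)\big(L_2(x_0)R_2(x_0)-R_2(x_0)L_2(x_0)\big)=(q^2-1)D_3(x_0)+D_4(x_0)-q^DD_1(x_0)^{-1}D_2(x_0)^{-1}$.
   Context: $\Omega$ is a $D$-dimensional vector space over a finite field $\mathbb F$ and $q=\sqrt{|\mathbb F|}$. $\mathcal L(\Omega)$ is the set of subspaces of $\Omega$ and $\mathbb C^{\mathcal L(\Omega)}$ the complex vector space with basis $\mathcal L(\Omega)$; $x'\subset\mathrel{\cdot} x$ means $x'\subseteq x$ with $\dim x'=\dim x-1$; $|y|$ denotes the cardinality of a subspace $y$ (so $|y|=q^{2\dim y}$). Fix subspaces $x_0,x_1$ with $\Omega=x_0\oplus x_1$; for $u\in\Omega$ write $u=u_0+u_1$ with $u_0\in x_0$, $u_1\in x_1$. For $x\in\mathcal L(\Omega)$ let $\tau(x):(x+x_0)/x_0\to x_0/(x\cap x_0)$ be the linear map $u+x_0\mapsto u_0+(x\cap x_0)$ ($u\in x$). Linear maps on $\mathbb C^{\mathcal L(\Omega)}$ are defined on the basis by: $L_1(x_0)x=\sum x'$ over $x'\subset\mathrel{\cdot} x$ with $x'\cap x_0=x\cap x_0$; $L_2(x_0)x=\sum x'$ over $x'\subset\mathrel{\cdot} x$ with $x'+x_0=x+x_0$; $R_1(x_0)x=\sum x'$ over $x\subset\mathrel{\cdot} x'$ with $x'\cap x_0=x\cap x_0$; $R_2(x_0)x=\sum x'$ over $x\subset\mathrel{\cdot}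 x'$ with $x'+x_0=x+x_0$; $D_1(x_0)x=q^{\dim(\Omega/x_0)-2\dim((x+x_0)/x_0)}x$; $D_2(x_0)x=q^{\dim x_0-2\dim(x\cap x_0)}x$; $D_3(x_0)x=\sum x'$ over $x'\in\mathcal L(\Omega)$ with $x'+x_0=x+x_0$, $x'\cap x_0=x\cap x_0$ and $\operatorname{rank}(\tau(x')-\tau(x))=1$; $D_4(x_0)x=\big(\frac{|x|+|x_0|}{|x\cap x_0|}-1\big)x$. *)

(* Defs.v *)
From HB Require Import structures.
From mathcomp Require Import all_boot all_order all_algebra all_field.
Set Implicit Arguments. Unset Strict Implicit. Unset Printing Implicit Defensive.
Import Order.TTheory GRing.Theory Num.Theory.
Local Open Scope ring_scope.

(* Omega is modelled as 'rV[F]_D (any D-dimensional F-space is isomorphic). *)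
Import VectorInternalTheory.
HB.instance Definition _ (F : finFieldType) (D : nat) :=
  [Finite of space ('rV[F]_D) by <:].

Notation CL F D := {ffun {vspace 'rV[F]_D} -> algC^o}.

Section Defs.
Variables (F : finFieldType) (D : nat).
Local Notation V := 'rV[F]_D.
Local Notation LS := {vspace V}.

Definition qF : algC := sqrtC (#|F|%:R).

Local Notation CL := {ffun LS -> algC^o}.

Definition bvec (x : LS) : CL := [ffun y => (y == x)%:R].

Definition bsum (P : pred LS) : CL := [ffun y => (P y)%:R].

Definition linext (T : LS -> CL) (f : CL) : CL := \sum_(x : LS) f x *: T x.

Definition covby (x' x : LS) : bool := (x' <= x)%VS && (\dim x' + 1 == \dim x)%N.

Definition cardv (y : LS) : algC := qF ^+ (2 * \dim y).

Definition comp0 (x0 x1 : LS) (u : V) : V := daddv_pi x0 x1 u.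

(* rank of tau(x') - tau(x), where tau(y) : (y+x0)/x0 -> x0/(y :&: x0),
   u + x0 |-> u_0 + (y :&: x0) (u in y). For x, x' with the same
   x + x0 and x :&: x0 the difference maps the class w = u + x0 = u' + x0
   (u in x, u' in x') to u'_0 - u_0 + (x :&: x0); its rank is the dimension
   of its image in x0/(x :&: x0). *)
Definition tau_diff_img (x0 x1 x x' : LS) : LS :=
  (\sum_(u : V | u \in x) \sum_(u' : V | (u' \in x') && (u' - u \in x0))
      <[comp0 x0 x1 u' - comp0 x0 x1 u]>)%VS.
Definition rank_tau_diff (x0 x1 x x' : LS) : nat :=
  (\dim (tau_diff_img x0 x1 x x' + (x :&: x0)) - \dim (x :&: x0))%N.

Variables (x0 x1 : LS).

Definition L1 : CL -> CL := linext (fun x =>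
  bsum (fun x' => covby x' x && (x' :&: x0 == x :&: x0)%VS)).
Definition L2 : CL -> CL := linext (fun x =>
  bsum (fun x' => covby x' x && (x' + x0 == x + x0)%VS)).
Definition R1 : CL -> CL := linext (fun x =>
  bsum (fun x' => covby x x' && (x' :&: x0 == x :&: x0)%VS)).
Definition R2 : CL -> CL := linext (fun x =>
  bsum (fun x' => covby x x' && (x' + x0 == x + x0)%VS)).

Definition e1 (x : LS) : int :=
  (D - \dim x0)%:Z - 2 * (\dim (x + x0) - \dim x0)%:Z.
Definition e2 (x : LS) : int := (\dim x0)%:Z - 2 * (\dim (x :&: x0))%:Z.

Definition D1 : CL -> CL := linext (fun x => qF ^ e1 x *: bvec x).
Definition D2 : CL -> CL := linext (fun x => qF ^ e2 x *: bvec x).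
Definition D1inv : CL -> CL := linext (fun x => (qF ^ e1 x)^-1 *: bvec x).
Definition D2inv : CL -> CL := linext (fun x => (qF ^ e2 x)^-1 *: bvec x).

Definition D3 : CL -> CL := linext (fun x =>
  bsum (fun x' => [&& (x' + x0 == x + x0)%VS, (x' :&: x0 == x :&: x0)%VS
                    & rank_tau_diff x0 x1 x x' == 1%N])).
Definition D4 : CL -> CL := linext (fun x =>
  ((cardv x + cardv x0) / cardv (x :&: x0) - 1) *: bvec x).

End Defs.

(* Main.v *)
Require Import Defs.
From HB Require Import structures.
From mathcomp Require Import all_boot all_order all_algebra all_field.
From mathcomp Require Import zify ring.
Set Implicit Arguments. Unset Strict Implicit. Unset Printing Implicit Defensive.
Import GRing.Theory Num.Theory.
Local Open Scope ring_scope.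


Section Count.
Variables (F : finFieldType) (D : nat).
Local Notation V := 'rV[F]_D.
Local Notation LS := {vspace V}.

Lemma card_diff (U W : LS) : (U <= W)%VS ->
  #|[set v | (v \in W) && (v \notin U)]| = (#|F| ^ \dim W - #|F| ^ \dim U)%N.
Proof.
move=> sUW; rewrite -!card_vspace -(cardID (mem U) (mem W)).
have -> : #|[predI mem W & mem U]| = #|U|.
  apply: eq_card => v; rewrite !inE /=.
  by case vU: (v \in U); rewrite ?andbT ?andbF //= (subvP sUW).
rewrite addKn; apply: eq_card => v; rewrite !inE /=.
by rewrite andbC.
Qed.

Lemma dim_add_line (U : LS) v : v \notin U -> \dim (U + <[v]>)%VS = (\dim U).+1.
Proof.
move=> vU.
have sU : (U <= U + <[v]>)%VS by exact: addvSl.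
have vin : v \in (U + <[v]>)%VS by exact: (subvP (addvSr U <[v]>) v (memv_line v)).
have lt : (\dim U < \dim (U + <[v]>)%VS)%N.
  rewrite (ltn_leqif (dimv_leqif_eq sU)); apply: contra vU => /eqP ->; exact: vin.
have := dimv_sum_cap U <[v]>; rewrite dim_vline.
case: (v != 0) => /=; lia.
Qed.

Lemma count_covers (U W : LS) : (U <= W)%VS ->
  (#|[set z : LS | covby U z && (z <= W)%VS]| * (#|F| ^ \dim U * (#|F| - 1))
   = #|F| ^ \dim W - #|F| ^ \dim U)%N.
Proof.
move=> sUW; rewrite -card_diff // -[in RHS]sum1_card.
rewrite (partition_big (fun v => (U + <[v]>)%VS)
           (fun z => covby U z && (z <= W)%VS)); last first.
  move=> v; rewrite inE => /andP[vW vU]; apply/andP; split.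
    by rewrite /covby addvSl dim_add_line // addn1 eqxx.
  by rewrite subv_add sUW -memvE.
symmetry; transitivity (\sum_(z in [set z : LS | covby U z && (z <= W)%VS])
    (#|F| ^ \dim U * (#|F| - 1))%N); last by rewrite sum_nat_const.
apply: eq_big => [z | z]; first by rewrite inE.
move=> /andP[/andP[sUz /eqP dz] szW].
rewrite sum1dep_card.
transitivity #|[set v | (v \in z) && (v \notin U)]|.
  apply: eq_card => v; rewrite !inE /=.
  apply/idP/idP.
    move=> /andP[/andP[vW vU] /eqP <-]; rewrite vU andbT.
    exact: (subvP (addvSr U <[v]>) v (memv_line v)).
  move=> /andP[vz vU]; rewrite vU (subvP szW) //=.
  rewrite eqEdim subv_add sUz -memvE vz /= dim_add_line //.
  by rewrite -dz addn1.
by rewrite card_diff // -dz addn1 expnS mulnBr muln1 mulnC.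
Qed.

Definition dot (u v : V) : F := \sum_j u 0 j * v 0 j.
Definition pmx (S : LS) : 'M[F]_(D, \dim S) := \matrix_(j, i) ((vbasis S)`_i 0 j).
Definition perp (S : LS) : LS := lker (linfun (mulmxr (pmx S))).

Lemma dotC u v : dot u v = dot v u.
Proof. by apply: eq_bigr => j _; rewrite mulrC. Qed.

Lemma dot_sumr u n (c : 'I_n -> F) (b : 'I_n -> V) :
  dot u (\sum_i c i *: b i) = \sum_i c i * dot u (b i).
Proof.
rewrite /dot; under eq_bigr do rewrite summxE mulr_sumr.
rewrite exchange_big /=; apply: eq_bigr => i _; rewrite mulr_sumr.
by apply: eq_bigr => j _; rewrite mxE mulrCA.
Qed.

Lemma dotDr u v w : dot u (v + w) = dot u v + dot u w.
Proof. by rewrite /dot -big_split; apply: eq_bigr => j _; rewrite mxE mulrDr. Qed.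

Lemma pmxE (S : LS) v i : (v *m pmx S) 0 i = dot v (vbasis S)`_i.
Proof. by rewrite mxE; apply: eq_bigr => j _; rewrite mxE. Qed.

Lemma perpP (S : LS) v : reflect (forall s, s \in S -> dot v s = 0) (v \in perp S).
Proof.
rewrite memv_ker lfunE /=; apply: (iffP eqP) => [H s sS | H].
  rewrite (coord_vbasis sS) dot_sumr big1 // => i _.
  by rewrite -pmxE H mxE mulr0.
apply/rowP => i; rewrite pmxE mxE H //; apply: vbasis_mem; apply: mem_nth; by rewrite size_tuple.
Qed.

Lemma perp_sub_mono (S T : LS) : (S <= T)%VS -> (perp T <= perp S)%VS.
Proof.
move=> sST; apply/subvP => v /perpP H; apply/perpP => s sS.
by apply: H; exact: (subvP sST).
Qed.

Lemma dimV : \dim (fullv : LS) = D.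
Proof. by rewrite dimvf dim_matrix mul1r. Qed.

Lemma dim_leD (S : LS) : (\dim S <= D)%N.
Proof. by have := dimvS (subvf S); rewrite dimV. Qed.

Lemma dim_perp_ge (S : LS) : (D <= \dim (perp S) + \dim S)%N.
Proof.
have := limg_ker_dim (linfun (mulmxr (pmx S))) (fullv : LS).
rewrite capvC capvf dimV /perp => h.
have := dimvS (@subvf _ 'rV[F]_(\dim S) (limg (linfun (mulmxr (pmx S))))).
rewrite dimvf dim_matrix mul1r => hl.
rewrite -[X in (X <= _)%N]h leq_add2l; exact: hl.
Qed.

Lemma perp_full : perp fullv = 0%VS.
Proof.
apply/eqP; rewrite -subv0; apply/subvP => v /perpP H; rewrite memv0.
apply/eqP/rowP => j; rewrite mxE.
have := H (delta_mx 0 j) (memvf _); rewrite /dot (bigD1 j) //= big1.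
  by rewrite mxE !eqxx mulr1 addr0.
by move=> k kj; rewrite mxE (negbTE kj) andbF mulr0.
Qed.

Lemma dim_perp (S : LS) : \dim (perp S) = (D - \dim S)%N.
Proof.
have h1 := dim_perp_ge S; have h2 := dim_perp_ge S^C.
have hc : \dim S^C = (D - \dim S)%N by rewrite dimv_compl dimvf dim_matrix mul1r.
have h3 := dimv_sum_cap (perp S) (perp S^C).
have e0 : (perp S :&: perp S^C = 0)%VS.
  apply/eqP; rewrite -subv0 -perp_full; apply/subvP => v.
  rewrite memv_cap => /andP[/perpP H1 /perpP H2]; apply/perpP => s _.
  have : s \in (S + S^C)%VS by rewrite addv_complf memvf.
  by case/memv_addP => a aS [b bC ->]; rewrite dotDr H1 // H2 // addr0.
have h4 := dim_leD (perp S + perp S^C); have h5 := dim_leD S.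
rewrite e0 dimv0 in h3; lia.
Qed.

Lemma perpK : cancel perp perp.
Proof.
move=> S; apply/eqP; rewrite eq_sym eqEdim !dim_perp.
have h := dim_leD S; rewrite (_ : D - (D - _) = \dim S)%N; last by lia.
rewrite leqnn andbT; apply/subvP => s sS; apply/perpP => v /perpP H.
by rewrite dotC H.
Qed.

Lemma perp_sub (S T : LS) : (perp T <= perp S)%VS = (S <= T)%VS.
Proof.
apply/idP/idP; last exact: perp_sub_mono.
by move=> /perp_sub_mono; rewrite !perpK.
Qed.

Lemma covby_perp (z x : LS) : covby z x = covby (perp x) (perp z).
Proof.
rewrite /covby perp_sub !dim_perp; congr (_ && _).
have := dim_leD z; have := dim_leD x; move=> h1 h2.
by apply/eqP/eqP; lia.
Qed.

Lemma card_perp (A : {set LS}) (B : {set LS}) :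
  (forall w, (w \in B) = (perp w \in A)) -> #|A| = #|B|.
Proof.
move=> H; rewrite -(card_imset _ (can_inj perpK)) (can2_imset_pre _ perpK perpK).
by apply: eq_card => w; rewrite !inE H.
Qed.

Lemma hyp_count (x : LS) :
  (#|[set z : LS | covby z x]| * (#|F| ^ (D - \dim x) * (#|F| - 1))
   = #|F| ^ D - #|F| ^ (D - \dim x))%N.
Proof.
rewrite (@card_perp _ [set w : LS | covby (perp x) w && (w <= fullv)%VS]).
  by rewrite -dim_perp count_covers ?subvf // dimV.
by move=> w; rewrite !inE subvf andbT covby_perp perpK.
Qed.

Lemma hypc_count (x c : LS) : (c <= x)%VS ->
  (#|[set z : LS | covby z x && (c <= z)%VS]| * (#|F| ^ (D - \dim x) * (#|F| - 1))
   = #|F| ^ (D - \dim c) - #|F| ^ (D - \dim x))%N.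
Proof.
move=> scx.
rewrite (@card_perp _ [set w : LS | covby (perp x) w && (w <= perp c)%VS]).
  by rewrite -!dim_perp count_covers // perp_sub.
by move=> w; rewrite !inE covby_perp !perpK -perp_sub perpK.
Qed.
End Count.

Section Kernel.
Variables (F : finFieldType) (D : nat).
Local Notation V := 'rV[F]_D.
Local Notation LS := {vspace V}.
Variables (x0 x1 : LS).
Hypothesis hdirect : (x0 :&: x1 = 0)%VS.

Lemma comp0_diff (u u' : V) : u' - u \in x0 ->
  comp0 x0 x1 u' - comp0 x0 x1 u = u' - u.
Proof. by move=> h; rewrite /comp0 -linearB /= daddv_pi_id. Qed.

Lemma tau_img (x y : LS) : tau_diff_img x0 x1 x y = ((x + y) :&: x0)%VS.
Proof.
apply/subv_anti/andP; split.
  apply/subv_sumP => u ux; apply/subv_sumP => u' /andP[u'y d0].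
  rewrite comp0_diff // -memvE memv_cap d0 andbT addvC.
  by apply: memv_add => //; rewrite rpredN.
apply/subvP => w; rewrite memv_cap => /andP[/memv_addP[a ax [b yb ->]] wx0].
rewrite memvE; apply: (sumv_sup (- a)); first by rewrite rpredN.
apply: (sumv_sup b); first by rewrite yb opprK addrC.
rewrite comp0_diff; last by rewrite opprK addrC.
by rewrite opprK addrC.
Qed.

Lemma card_uniq (S : {set LS}) w : (forall z, z \in S -> z = w) -> #|S| = (w \in S).
Proof.
move=> H; case: (boolP (w \in S)) => wS.
  apply/eqP/cards1P; exists w; apply/setP => z; rewrite inE.
  by apply/idP/eqP => [/H|->].
apply/eqP; rewrite cards_eq0; apply/eqP/setP => z; rewrite inE.
by apply/negbTE; apply: contra wS => zS; rewrite -(H z zS).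
Qed.

Lemma sub_eq_dim (U W : LS) : (U <= W)%VS -> (U == W) = (\dim U == \dim W).
Proof.
move=> sUW; rewrite eqEdim sUW /=; apply/idP/eqP => [h|->//].
by apply/eqP; rewrite eqn_leq h dimvS.
Qed.

Definition KL (x y : LS) := #|[set z : LS | (covby x z && (z + x0 == x + x0)%VS) &&
                                   (covby y z && (y + x0 == z + x0)%VS)]|.
Definition KR (x y : LS) := #|[set z : LS | (covby z x && (z + x0 == x + x0)%VS) &&
                                   (covby z y && (y + x0 == z + x0)%VS)]|.
Definition D3b (x y : LS) : bool := [&& (y + x0 == x + x0)%VS, (y :&: x0 == x :&: x0)%VS
                    & rank_tau_diff x0 x1 x y == 1%N].

End Kernel.


Section Kernel2.
Variables (F : finFieldType) (D : nat).
Local Notation V := 'rV[F]_D.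
Local Notation LS := {vspace V}.
Variables (x0 x1 : LS).
Hypothesis hdirect : (x0 :&: x1 = 0)%VS.

Lemma offdiag (x y : LS) : x != y -> KL x0 x y = (KR x0 x y + D3b x0 x1 x y)%N.
Proof.
move=> nxy; rewrite /KL /KR.
rewrite (@card_uniq _ _ _ (x + y)%VS); last first.
  move=> z; rewrite inE => /andP[/andP[/andP[sxz /eqP dxz] _] /andP[/andP[syz /eqP dyz] _]].
  apply/eqP; rewrite eq_sym eqEdim subv_add sxz syz /= -dxz.
  rewrite addn1 (ltn_leqif (dimv_leqif_eq (addvSl x y))).
  apply/negP => /eqP ex; case/negP: nxy; rewrite eq_sym sub_eq_dim.
    by apply/eqP; lia.
  by rewrite ex addvSr.
rewrite (@card_uniq _ _ _ (x :&: y)%VS); last first.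
  move=> z; rewrite inE => /andP[/andP[/andP[szx /eqP dzx] _] /andP[/andP[szy /eqP dzy] _]].
  apply/eqP; rewrite eqEdim subv_cap szx szy /=.
  have : (\dim (x :&: y) < \dim x)%N.
    rewrite (ltn_leqif (dimv_leqif_eq (capvSl x y))).
    apply/negP => /eqP ex; case/negP: nxy; rewrite sub_eq_dim.
      by apply/eqP; lia.
    by rewrite -ex capvSr.
  lia.
rewrite !inE /D3b /rank_tau_diff tau_img //.
case eW: (y + x0 == x + x0)%VS; last first.
  rewrite /= addn0.
  have -> : [&& covby (x :&: y) x && ((x :&: y + x0)%VS == (x + x0)%VS), covby (x :&: y) y
     & (y + x0)%VS == (x :&: y + x0)%VS] = false.
    by apply/negP => /and3P[/andP[_ /eqP e1] _ /eqP e2]; move/negP: eW; apply; rewrite e2 e1.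
  suff -> : [&& covby x (x + y) && (x + y + x0 == x + x0)%VS, covby y (x + y)
     & (y + x0 == x + y + x0)%VS] = false by [].
  by apply/negP => /and3P[/andP[_ /eqP e1] _ /eqP e2]; move/negP: eW; apply; rewrite e2 e1.
move/eqP: (eW) => eW'.
have eS : (x + y + x0 = x + x0)%VS by rewrite -addvA eW' addvA addvv.
rewrite eS eW' eqxx /= andbT [(x + x0 == _)%VS]eq_sym.
rewrite sub_eq_dim; last by rewrite addvS ?capvSl ?subvv.
rewrite /covby addvSl addvSr capvSl capvSr /=.
have -> : ((x + y) :&: x0 + x :&: x0 = (x + y) :&: x0)%VS.
  by apply/addv_idPl; rewrite capvS ?addvSl ?subvv.
have E1 := dimv_sum_cap x y; have E2 := dimv_sum_cap x x0.
have E3 := dimv_sum_cap y x0; rewrite eW' in E3.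
have E4 := dimv_sum_cap (x + y) x0; rewrite eS in E4.
have E5 := dimv_sum_cap (x :&: y) x0.
have ec : (x :&: y :&: x0 = (x :&: x0) :&: (y :&: x0))%VS.
  apply/vspaceP => v; rewrite !memv_cap.
  by case: (v \in x); case: (v \in y); case: (v \in x0).
rewrite ec in E5.
have E6 := dimv_sum_cap (x :&: x0) (y :&: x0).
have F1 : (\dim (x :&: x0 + y :&: x0) <= \dim ((x + y) :&: x0))%N.
  by apply: dimvS; rewrite subv_add !capvS ?addvSl ?addvSr ?subvv.
have F2 := dimvS (addvSl (x :&: x0) (y :&: x0)).
case eC: (y :&: x0 == x :&: x0)%VS.
  move/eqP: eC => eC; rewrite eC addvv capvv in E6 F1 E5.
  rewrite eC in E3.
  repeat (case: eqP => /=; intros); lia.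
have G : (\dim (x :&: x0 + y :&: x0) != \dim (x :&: x0)) || (\dim (y :&: x0) != \dim (x :&: x0)).
  rewrite -negb_and; apply/negP => /andP[/eqP h1 /eqP h2]; move/negP: eC; apply.
  rewrite sub_eq_dim ?h2 //.
  have : (x :&: x0 == x :&: x0 + y :&: x0)%VS by rewrite sub_eq_dim ?addvSl // h1.
  by move/eqP ->; rewrite addvSr.
move: G; rewrite /=.
repeat (case: eqP => /=; intros); lia.
Qed.

Lemma KL_diag (x : LS) : KL x0 x x = #|[set z : LS | covby x z && (z <= x + x0)%VS]|.
Proof.
apply: eq_card => z; rewrite !inE; case cz: (covby x z) => //=.
rewrite [(x + x0 == _)%VS]eq_sym andbb.
move: cz => /andP[sxz _].
apply/eqP/idP => [<-|szW]; first exact: addvSl.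
by apply/subv_anti; rewrite subv_add szW addvSr addvS ?subvv.
Qed.

Lemma covby_sum_iff (x z : LS) : covby z x ->
  (z + x0 == x + x0)%VS = ~~ (x :&: x0 <= z)%VS.
Proof.
move=> /andP[szx /eqP dz].
rewrite sub_eq_dim; last by rewrite addvS ?subvv.
have -> : (x :&: x0 <= z)%VS = (z :&: x0 == x :&: x0)%VS.
  apply/idP/eqP => [h|<-]; last exact: capvSl.
  by apply/subv_anti; rewrite !subv_cap !capvSr h (subv_trans (capvSl _ _) szx).
rewrite (@sub_eq_dim _ _ (z :&: x0) (x :&: x0)); last by rewrite capvS ?subvv.
have E1 := dimv_sum_cap z x0; have E2 := dimv_sum_cap x x0.
have E3 := dimv_sum_cap z (x :&: x0).
have e3 : (z :&: (x :&: x0) = z :&: x0)%VS.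
  by rewrite capvA; congr (_ :&: _)%VS; apply/capv_idPl.
rewrite e3 in E3.
have F1 : (\dim (z + x :&: x0) <= \dim x)%N.
  by apply: dimvS; rewrite subv_add szx capvSl.
have F2 : (\dim (z :&: x0) <= \dim (x :&: x0))%N.
  by apply: dimvS; rewrite capvS ?subvv.
repeat (case: eqP => /=; intros); lia.
Qed.

Lemma KR_diag (x : LS) : (KR x0 x x + #|[set z : LS | covby z x && (x :&: x0 <= z)%VS]|
   = #|[set z : LS | covby z x]|)%N.
Proof.
rewrite -(cardID [set z : LS | (x :&: x0 <= z)%VS] [set z : LS | covby z x]) addnC.
congr (_ + _)%N; apply: eq_card => z; rewrite !inE /=.
  by [].
case cz: (covby z x) => /=; last by case: (x :&: x0 <= z)%VS.
by rewrite andbT [(x + x0 == _)%VS]eq_sym andbb covby_sum_iff.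
Qed.
End Kernel2.

Lemma D3b_diag (F : finFieldType) (D : nat) (x0 x1 : {vspace 'rV[F]_D}) :
  (x0 :&: x1 = 0)%VS -> forall x, D3b x0 x1 x x = false.
Proof. by move=> h x; rewrite /D3b /rank_tau_diff tau_img // !addvv subnn !andbF. Qed.


Lemma linextE (F : finFieldType) (D : nat) (T : {vspace 'rV[F]_D} -> CL F D) f y :
  linext T f y = \sum_x f x * T x y.
Proof. by rewrite /linext sum_ffunE; apply: eq_bigr => x _; rewrite ffunE. Qed.

Lemma swap_sum (F : finFieldType) (D : nat) (T : {vspace 'rV[F]_D} -> CL F D)
   (g : {vspace 'rV[F]_D} -> algC) (f : CL F D) :
  \sum_z linext T f z * g z = \sum_x f x * \sum_z T x z * g z.
Proof.
under eq_bigr do rewrite linextE mulr_suml.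
rewrite exchange_big; apply: eq_bigr => x _; rewrite mulr_sumr.
by apply: eq_bigr => z _; rewrite mulrA.
Qed.

Lemma sum_ind (F : finFieldType) (D : nat) (P : pred {vspace 'rV[F]_D}) :
  \sum_z ((P z)%:R : algC) = #|[set z | P z]|%:R.
Proof.
rewrite -natr_sum; congr (_%:R); rewrite -sum1dep_card [RHS]big_mkcond /=.
by apply: eq_bigr => z _; case: (P z).
Qed.

Lemma scalC (a b : algC^o) : a *: b = a * b.
Proof. by []. Qed.

Lemma cast_count (n p a b : nat) : (0 < p)%N -> (a <= b)%N ->
  (n * (p ^ a * (p - 1)) = p ^ b - p ^ a)%N ->
  (n%:R : algC) * (p%:R - 1) = (p%:R) ^+ (b - a) - 1.
Proof.
move=> p0 ab h; have := congr1 (fun m => (m%:R : algC)) h.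
rewrite /= !natrM (natrB _ (leq_pexp2l p0 ab)) (natrB _ p0) !natrX => h'.
have P0 : (p%:R : algC) != 0 by rewrite pnatr_eq0 -lt0n.
apply: (mulfI (expf_neq0 a P0)); rewrite [RHS]mulrBr mulr1 -exprD subnKC // -h'.
by ring.
Qed.

Lemma kernel (F : finFieldType) (D : nat) (x0 x1 : {vspace 'rV[F]_D}) :
  (x0 :&: x1 = 0)%VS -> forall x y,
  (qF F ^+ 2 - 1) * ((KL x0 x y)%:R - (KR x0 x y)%:R) =
  (qF F ^+ 2 - 1) * (D3b x0 x1 x y)%:R + (y == x)%:R *
   ((cardv x + cardv x0) / cardv (x :&: x0) - 1
     - qF F ^+ D * ((qF F ^ e2 x0 x)^-1 / qF F ^ e1 x0 x)).
Proof.
move=> hd x y; case: (eqVneq y x) => [<-{x}|nyx]; last first.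
  rewrite mul0r addr0 (offdiag hd); last by rewrite eq_sym.
  by rewrite natrD; ring.
rewrite (D3b_diag hd) mul1r mulr0 add0r.
set P : algC := (#|F|%:R).
have qF2 : qF F ^+ 2 = P by rewrite /qF sqrtCK.
have cardvE (z : {vspace 'rV[F]_D}) : cardv z = P ^+ \dim z.
  by rewrite /cardv exprM qF2.
have p0 : (0 < #|F|)%N by apply/card_gt0P; exists 0.
have P0 : P != 0 by rewrite pnatr_eq0 -lt0n.
have q0 : qF F != 0 by apply: contraNneq P0 => h; rewrite -qF2 h expr0n.
have E1 := dimv_sum_cap y x0.
have hcx : (\dim (y :&: x0) <= \dim y)%N by apply: dimvS; exact: capvSl.
have hc0 : (\dim (y :&: x0) <= \dim x0)%N by apply: dimvS; exact: capvSr.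
have hxD := dim_leD y; have h0D := dim_leD x0.
have hL := cast_count p0 _ (count_covers (addvSl y x0)).
rewrite dimvS ?addvSl // in hL; have {}hL := hL isT.
have hT := cast_count p0 _ (hyp_count y).
have {}hT := hT (leq_subr _ _).
have hTc := cast_count p0 _ (hypc_count (capvSl y x0)).
have {}hTc : _ := hTc (leq_sub2l _ hcx).
have hR := KR_diag x0 y.
rewrite (KL_diag x0 y).
have -> : (KR x0 y y)%:R = (#|[set z | covby z y]|%:R : algC) -
   (#|[set z | covby z y && (y :&: x0 <= z)%VS]|)%:R.
  by rewrite -hR natrD addrK.
set nL := (#|_|%:R : algC) in hL *.
set T := (#|[set z | covby z y]|%:R : algC) in hT *.
set Tc := (#|[set z | covby z y && (y :&: x0 <= z)%VS]|%:R : algC) in hTc *.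
rewrite -/P in hL hT hTc.
rewrite (_ : (D - (D - \dim y))%N = \dim y) in hT; last by lia.
rewrite (_ : (D - \dim (y :&: x0) - (D - \dim y))%N = (\dim y - \dim (y :&: x0))%N) in hTc;
  last by lia.
rewrite (_ : (\dim (y + x0) - \dim y)%N = (\dim x0 - \dim (y :&: x0))%N) in hL;
  last by lia.
have hq : qF F ^+ D = qF F ^ e1 x0 y * qF F ^ e2 x0 y * P ^+ \dim y.
  rewrite -qF2 -exprM !exprnP -!expfzDr //; congr (_ ^ _); rewrite /e1 /e2; lia.
rewrite qF2 !cardvE hq.
have ey : P ^+ \dim y = P ^+ (\dim y - \dim (y :&: x0)) * P ^+ \dim (y :&: x0).
  by rewrite -exprD subnK.
have e0 : P ^+ \dim x0 = P ^+ (\dim x0 - \dim (y :&: x0)) * P ^+ \dim (y :&: x0).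
  by rewrite -exprD subnK.
transitivity (nL * (P - 1) - (T * (P - 1) - Tc * (P - 1))); first by ring.
rewrite hL hT hTc ey e0.
have hc : P ^+ \dim (y :&: x0) != 0 by rewrite expf_neq0.
have h1 : qF F ^ e1 x0 y != 0 by rewrite expfz_neq0.
have h2 : qF F ^ e2 x0 y != 0 by rewrite expfz_neq0.
move: hc h1 h2.
set a := P ^+ (\dim y - _); set b := P ^+ (\dim x0 - _); set c := P ^+ _.
set u := qF F ^ _; set v := qF F ^ _.
move=> hc h1 h2; field; by rewrite h1 h2 hc.
Qed.

Unset Implicit Arguments.

Theorem mainTheorem16 (F : finFieldType) (D : nat)
    (x0 x1 : {vspace 'rV[F]_D})
    (hdirect : (x0 :&: x1 = 0)%VS) (hfull : (x0 + x1 = fullv)%VS) :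
  forall f : CL F D,
    (qF F ^+ 2 - 1) *: (L2 x0 (R2 x0 f) - R2 x0 (L2 x0 f)) =
    (qF F ^+ 2 - 1) *: D3 x0 x1 f + D4 x0 f
      - qF F ^+ D *: D1inv x0 (D2inv x0 f).
Proof.
move=> f; apply/ffunP => y; rewrite !ffunE /L2 /R2 /D3 /D4 /D1inv /D2inv !linextE.
rewrite !swap_sum.
rewrite -sumrB !scaler_sumr -big_split -sumrB /=.
apply: eq_bigr => x _.
have eL : \sum_z bsum (fun x' => covby x x' && (x' + x0 == x + x0)%VS) z *
     bsum (fun x' => covby x' z && (x' + x0 == z + x0)%VS) y = (KL x0 x y)%:R.
  by rewrite -sum_ind; apply: eq_bigr => z _; rewrite !ffunE -natrM mulnb.
have eR : \sum_z bsum (fun x' => covby x' x && (x' + x0 == x + x0)%VS) z *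
     bsum (fun x' => covby z x' && (x' + x0 == z + x0)%VS) y = (KR x0 x y)%:R.
  by rewrite -sum_ind; apply: eq_bigr => z _; rewrite !ffunE -natrM mulnb.
have eD : bsum (fun x' => [&& (x' + x0 == x + x0)%VS, (x' :&: x0 == x :&: x0)%VS
        & rank_tau_diff x0 x1 x x' == 1%N]) y = (D3b x0 x1 x y)%:R.
  by rewrite ffunE.
have e4 : (((cardv x + cardv x0) / cardv (x :&: x0) - 1) *: bvec x) y =
   ((cardv x + cardv x0) / cardv (x :&: x0) - 1) * (y == x)%:R.
  by rewrite !ffunE.
have e12 : \sum_z ((qF F ^ e2 x0 x)^-1 *: bvec x) z * ((qF F ^ e1 x0 z)^-1 *: bvec z) y
   = (qF F ^ e2 x0 x)^-1 * (qF F ^ e1 x0 x)^-1 * (y == x)%:R.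
  rewrite (bigD1 x) //= big1 ?addr0 => [|z zx]; rewrite !ffunE ?eqxx ?(negbTE zx) !scalC.
    by rewrite mulr1 mulrA.
  by rewrite mulr0 mul0r.
rewrite eL eR eD e4 e12 !scalC.
transitivity (f x * ((qF F ^+ 2 - 1) * ((KL x0 x y)%:R - (KR x0 x y)%:R))).
  by ring.
by rewrite (kernel hdirect); ring.
Qed.
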